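(* For the $N$-relay 1-2-1 diamond network with relays operating in HD, writing $\ell_i=\ell_{i,0}$ and $r_i=\ell_{N+1,i}$, $\mathsf{C}_{\rm cs,iid}$ (HD states) equals the optimal value of the linear program in variables $\lambda_{\ell_i},\lambda_{r_i}$ ($i\in[1:N]$): $$\max\sum_{i=1}^N\lambda_{\ell_i}\ell_i\ \text{ s.t. }\ \lambda_{\ell_i}\ell_i=\lambda_{r_i}r_i\ \forall i;\quad \sum_{i=1}^N\lambda_{\ell_i}\le1;\quad\sum_{i=1}^N\lambda_{r_i}\le1;\quad \lambda_{\ell_i}+\lambda_{r_i}\le1\ \forall i;\quad \lambda_{\ell_i},\lambda_{r_i}\ge0\ \forall i.$$
   Context: Diamond network: nodes $[0:N+1]$, source $0$, destination $N+1$, relays $[1:N]$; the only links are $(0,i)$ and $(i,N+1)$ for $i\in[1:N]$, with positive capacities $\ell_{i,0}$ and $\ell_{N+1,i}$; all other $\ell_{j,i}=0$. HD network states: a state $s$ consists of sets $s_{i,t}\subseteq[1:N+1]\setminus\{i\}$ and $s_{i,r}\subseteq[0:N]\setminus\{i\}$, each of cardinality at most $1$, for $i\in[0:N+1]$, with $s_{0,r}=s_{N+1,t}=\emptyset$ and $|s_{i,t}|+|s_{i,r}|\le1$ for $i\in[1:N]$; $\mathcal S$ is the set of all such states. Link $(i,j)$ is active in $s$ if $j\in s_{i,t}$ and $i\in s_{j,r}$. $\mathsf{C}_{\rm cs,iid}=\max_{\lambda}\min_{\Omega}\sum_{i\in\Omega,\ j\in\Omega^c}\big(\sum_{s\in\mathcal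 S:\ (i,j)\text{ active in }s}\lambda_s\big)\ell_{j,i}$, maximum over probability vectors $(\lambda_s)_{s\in\mathcal S}$, minimum over $\Omega$ with $0\in\Omega\subseteq[0:N]$, $\Omega^c=[0:N+1]\setminus\Omega$. *)

(* Defs.v *)
From HB Require Import structures.
From mathcomp Require Import all_boot all_order all_algebra.
Set Implicit Arguments. Unset Strict Implicit. Unset Printing Implicit Defensive.
Import Order.TTheory GRing.Theory Num.Theory.
Local Open Scope ring_scope.

Definition node (N : nat) := 'I_N.+2.
Definition src {N : nat} : node N := ord0.
Definition dst {N : nat} : node N := ord_max.
Definition relay {N : nat} (k : 'I_N) : node N :=
  @Ordinal N.+2 k.+1 (leq_trans (ltn_ord k) (leqnSn N.+1)).

Definition state (N : nat) : finType :=
  ({ffun node N -> {set node N}} * {ffun node N -> {set node N}})%type.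
Definition st {N} (s : state N) (i : node N) : {set node N} := s.1 i.
Definition sr {N} (s : state N) (i : node N) : {set node N} := s.2 i.

Definition is_relay {N} (i : node N) : bool := (i != src) && (i != dst).

Definition valid_state {N} (s : state N) : bool :=
  [forall i : node N,
    [&& (#|st s i| <= 1)%N, (#|sr s i| <= 1)%N,
        i \notin st s i, src \notin st s i,
        i \notin sr s i, dst \notin sr s i &
        is_relay i ==> (#|st s i| + #|sr s i| <= 1)%N]]
  && (sr s src == set0) && (st s dst == set0).

Definition active {N} (s : state N) (i j : node N) : bool :=
  (j \in st s i) && (i \in sr s j).

(* ell j i = capacity of link (i,j): ell_{k,0} = lcap, ell_{N+1,k} = rcap *)
Definition ell {R : realFieldType} {N} (lcap rcap : 'I_N -> R) (j i : node N) : R :=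
  \sum_(k < N) ((if (i == src) && (j == relay k) then lcap k else 0)
              + (if (i == relay k) && (j == dst) then rcap k else 0)).

Definition prob_vec {R : realFieldType} {N} (lam : state N -> R) : Prop :=
  (forall s, 0 <= lam s) /\ \sum_(s : state N | valid_state s) lam s = 1.

Definition is_cut {N} (Om : {set node N}) : bool := (src \in Om) && (dst \notin Om).

Definition cut_value {R : realFieldType} {N} (lcap rcap : 'I_N -> R)
    (lam : state N -> R) (Om : {set node N}) : R :=
  \sum_(i in Om) \sum_(j in ~: Om)
     (\sum_(s : state N | valid_state s && active s i j) lam s) * ell lcap rcap j i.

Definition is_min_cut_value {R : realFieldType} {N} (lcap rcap : 'I_N -> R)
    (lam : state N -> R) (c : R) : Prop :=
  (exists Om, is_cut Om /\ c = cut_value lcap rcap lam Om) /\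
  (forall Om, is_cut Om -> c <= cut_value lcap rcap lam Om).

Definition cs_values {R : realFieldType} {N} (lcap rcap : 'I_N -> R) (c : R) : Prop :=
  exists lam : state N -> R, prob_vec lam /\ is_min_cut_value lcap rcap lam c.

Definition is_max {R : realFieldType} (P : R -> Prop) (c : R) : Prop :=
  P c /\ forall x, P x -> x <= c.

(* C_cs,iid is the value c with is_max (cs_values lcap rcap) c. *)

Definition lp_feasible {R : realFieldType} {N} (lcap rcap : 'I_N -> R)
    (xl xr : 'I_N -> R) : Prop :=
  (forall i, xl i * lcap i = xr i * rcap i) /\
  \sum_(i < N) xl i <= 1 /\ \sum_(i < N) xr i <= 1 /\
  (forall i, xl i + xr i <= 1) /\
  (forall i, 0 <= xl i /\ 0 <= xr i).

Definition lp_values {R : realFieldType} {N} (lcap rcap : 'I_N -> R) (c : R) : Prop :=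
  exists xl xr, lp_feasible lcap rcap xl xr /\ c = \sum_(i < N) xl i * lcap i.

(* Main.v *)
Require Import Defs.
From HB Require Import structures.
From mathcomp Require Import all_boot all_order all_algebra.
From mathcomp Require Import ring lra.
From Stdlib Require Import ClassicalEpsilon.
Set Implicit Arguments. Unset Strict Implicit. Unset Printing Implicit Defensive.
Import Order.TTheory GRing.Theory Num.Theory.
Local Open Scope ring_scope.
Definition dot {R : realFieldType} {V : finType} (a x : V -> R) : R := \sum_v a v * x v.

Lemma dot_lin (R : realFieldType) (V : finType) (a x e : V -> R) t :
  dot a (fun v => x v + t * e v) = dot a x + t * dot a e.
Proof. rewrite /dot mulr_sumr -big_split /=; apply: eq_bigr => v _; ring. Qed.

Lemma dot_ext (R : realFieldType) (V : finType) (a x y : V -> R) :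
  x =1 y -> dot a x = dot a y.
Proof. by move=> h; apply: eq_bigr => v _; rewrite h. Qed.

Lemma fin_argmin (R : realFieldType) (I : finType) (P : pred I) (g : I -> R) i0 :
  P i0 -> exists2 i, P i & forall j, P j -> g i <= g j.
Proof.
move=> Pi0; case: (@arg_minP _ R I i0 P g Pi0) => i Pi H; exists i => //.
Qed.

Lemma fin_argmax (R : realFieldType) (I : finType) (P : pred I) (g : I -> R) i0 :
  P i0 -> exists2 i, P i & forall j, P j -> g j <= g i.
Proof.
move=> Pi0; case: (@arg_maxP _ R I i0 P g Pi0) => i Pi H; exists i => //.
Qed.

Definition pb (P : Prop) : bool := if excluded_middle_informative P then true else false.
Lemma pbP (P : Prop) : reflect P (pb P).
Proof. rewrite /pb; case: excluded_middle_informative => h; by constructor. Qed.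

Definition feasE {R : realFieldType} {V C : finType} (a : C -> V -> R) (b : C -> R)
  (E : {set C}) (x : V -> R) : Prop :=
  (forall c, dot (a c) x <= b c) /\ (forall c, c \in E -> dot (a c) x = b c).

Definition optE {R : realFieldType} {V C : finType} (a : C -> V -> R) (b : C -> R) (f : V -> R)
  (E : {set C}) : Prop :=
  forall x0, feasE a b E x0 -> exists x, feasE a b E x /\
    forall y, feasE a b E y -> dot f y <= dot f x.

Lemma lp_move (R : realFieldType) (V C : finType) (a : C -> V -> R) (b : C -> R) (f : V -> R)
  (E : {set C}) (y e : V -> R) :
  feasE a b E y -> (forall c, c \in E -> dot (a c) e = 0) -> 0 <= dot f e ->
  (exists c, 0 < dot (a c) e) ->
  exists c, c \notin E /\ exists y', feasE a b (c |: E) y' /\ dot f y <= dot f y'.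
Proof.
move=> [hy hyE] he hf [c0 hc0].
have [c1 hc1 hmin] := @fin_argmin R C (fun c => 0 < dot (a c) e)
   (fun c => (b c - dot (a c) y) / dot (a c) e) c0 hc0.
set t := (b c1 - dot (a c1) y) / dot (a c1) e.
have ht : 0 <= t by rewrite /t divr_ge0 // ?subr_ge0 ?hy // ltW.
exists c1; split.
  apply/negP => hE; move: (he _ hE) hc1 => ->; by rewrite ltxx.
exists (fun v => y v + t * e v); split; last by rewrite dot_lin lerDl mulr_ge0.
split.
  move=> c; rewrite dot_lin.
  case: (ltP 0 (dot (a c) e)) => hce.
    have h := hmin c hce; rewrite ler_pdivlMr // in h.
    rewrite -/t in h; lra.
  have := hy c; have : t * dot (a c) e <= 0 by rewrite mulr_ge0_le0.
  lra.
move=> c; rewrite in_setU1 => /orP [/eqP -> | hE].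
  rewrite dot_lin /t divfK; first by ring.
  by rewrite lt0r_neq0.
by rewrite dot_lin he // mulr0 addr0 hyE.
Qed.
Lemma lp_step (R : realFieldType) (V C : finType) (a : C -> V -> R) (b : C -> R) (f : V -> R)
  (bnd : forall e, (forall c, dot (a c) e <= 0) -> forall v, e v = 0)
  (E : {set C}) :
  (forall E' : {set C}, (#|~: E'| < #|~: E|)%N -> optE a b f E') -> optE a b f E.
Proof.
move=> IH x0 hx0.
case: (classic (exists e : V -> R, (forall c, c \in E -> dot (a c) e = 0) /\ exists v, e v != 0)).
  move=> [e0 [he0 [v0 hv0]]].
  have [e [he [hf hpos]]] : exists e : V -> R, (forall c, c \in E -> dot (a c) e = 0) /\
      0 <= dot f e /\ exists c, 0 < dot (a c) e.
    have hpos : forall e : V -> R, (exists v, e v != 0) -> exists c, 0 < dot (a c) e.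
      move=> e [v hv]; apply: NNPP => hn.
      have : forall c, dot (a c) e <= 0.
        move=> c; rewrite leNgt; apply/negP => h; apply: hn; by exists c.
      move/bnd => /(_ v) h; by rewrite h eqxx in hv.
    case: (lerP 0 (dot f e0)) => hf0.
      exists e0; split => //; split => //; apply: hpos; by exists v0.
    exists (fun v => 0 + (-1) * e0 v).
    have hlin : forall g : V -> R, dot g (fun v => 0 + (-1) * e0 v) = - dot g e0.
      move=> g; rewrite dot_lin.
      have -> : dot g (fun _ => 0) = 0 by rewrite /dot big1 // => v _; rewrite mulr0.
      ring.
    split; first by move=> c hc; rewrite hlin he0 // oppr0.
    split; first by rewrite hlin; lra.
    apply: hpos; exists v0; rewrite add0r mulN1r oppr_eq0 //.
  pose cand c := (c \notin E) && pb (exists x, feasE a b (c |: E) x).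
  have hopt : forall c, cand c -> exists x, feasE a b (c |: E) x /\
      forall y, feasE a b (c |: E) y -> dot f y <= dot f x.
    move=> c /andP [hcE /pbP [x hx]].
    have hlt : (#|~: (c |: E)| < #|~: E|)%N.
      rewrite setCU.
      have -> : ~: [set c] :&: ~: E = ~: E :\ c by rewrite setDE setIC.
      apply: proper_card; apply: properD1; by rewrite in_setC.
    exact: (IH _ hlt x hx).
  pose xo c := epsilon (inhabits x0) (fun x => feasE a b (c |: E) x /\
      forall y, feasE a b (c |: E) y -> dot f y <= dot f x).
  have hxo : forall c, cand c -> feasE a b (c |: E) (xo c) /\
      forall y, feasE a b (c |: E) y -> dot f y <= dot f (xo c).
    move=> c hc; exact: (epsilon_spec (inhabits x0) _ (hopt c hc)).
  have [c0 [hc0E [y0 [hy0 _]]]] := lp_move hx0 he hf hpos.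
  have hc0 : cand c0 by rewrite /cand hc0E; apply/pbP; exists y0.
  have [cm hcm hmax] := @fin_argmax R C cand (fun c => dot f (xo c)) c0 hc0.
  have [[hxm1 hxm2] hxm3] := hxo cm hcm.
  exists (xo cm); split.
    split => // c hc; apply: hxm2; by rewrite in_setU1 hc orbT.
  move=> y hy.
  have [c [hcE [y' [hy' hyy']]]] := lp_move hy he hf hpos.
  have hc : cand c by rewrite /cand hcE; apply/pbP; exists y'.
  apply: (le_trans hyy'); apply: (le_trans (proj2 (hxo c hc) y' hy')).
  exact: hmax.
move=> hno.
exists x0; split => // y hy.
suff -> : dot f y = dot f x0 by [].
have hd : forall v, y v - x0 v = 0.
  move=> v; apply: NNPP => hv; apply: hno.
  exists (fun v => 0 + (-1) * x0 v + 1 * y v); split.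
    move=> c hc; rewrite dot_lin dot_lin (proj2 hy c hc) (proj2 hx0 c hc).
    have -> : dot (a c) (fun _ => 0) = 0 by rewrite /dot big1 // => w _; rewrite mulr0.
    ring.
  exists v; rewrite add0r mulN1r mul1r addrC; apply/eqP; exact: hv.
apply: eq_bigr => v _; have := hd v; move/eqP; rewrite subr_eq0 => /eqP -> //.
Qed.

Lemma lp_max (R : realFieldType) (V C : finType) (a : C -> V -> R) (b : C -> R) (f : V -> R)
  (bnd : forall e, (forall c, dot (a c) e <= 0) -> forall v, e v = 0)
  (x0 : V -> R) : (forall c, dot (a c) x0 <= b c) ->
  exists x, (forall c, dot (a c) x <= b c) /\
    forall y, (forall c, dot (a c) y <= b c) -> dot f y <= dot f x.
Proof.
move=> h0.
have main : forall n (E : {set C}), (#|~: E| <= n)%N -> optE a b f E.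
  elim=> [|n IHn] E hE; apply: lp_step => // E' hE'.
    by move: (leq_trans hE' hE).
  apply: IHn; by rewrite -ltnS (leq_trans hE' hE).
have hf0 : feasE a b set0 x0 by split => // c; rewrite in_set0.
have [x [[hx _] hmax]] := main _ set0 (leqnn _) x0 hf0.
exists x; split => // y hy; apply: hmax; split => // c; by rewrite in_set0.
Qed.
Lemma scalar_step (R : realFieldType) (u w X Y z p q : R) :
  0 <= u -> 0 <= w -> u + w <= 1 -> X + u <= 1 -> Y + w <= 1 -> 0 <= z ->
  0 <= p -> 0 <= q -> p = 1 - X - z -> q = 1 - Y - z -> (z = 0 \/ z = 1 - (X + Y)) ->
  forall b0 al be, b0 = (if 0 <= w - q then w - q else 0) ->
  al = (if u <= z - b0 then u else z - b0) ->
  be = (if w <= z - al then w else z - al) ->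
  [/\ 0 <= al, al <= u, 0 <= be, be <= w & al + be <= z] /\
  [/\ u - al <= p, w - be <= q &
      (z - al - be = 0 \/ z - al - be = 1 - ((X + u) + (Y + w)))].
Proof.
move=> hu hw huw hX hY hz hp hq ep eq hzz b0 al be -> -> ->.
case: (lerP 0 (w - q)) => h1; case: (lerP u _) => h2; case: (lerP w _) => h3;
  (split; [split|split]); try lra; case: hzz => hzz; try (left; lra); try (right; lra).
Qed.
Lemma sum_option (R : nmodType) (T : finType) (F : option T -> R) :
  \sum_(o : option T) F o = F None + \sum_(t : T) F (Some t).
Proof.
have -> : index_enum (option T) = None :: map Some (index_enum T).
  by rewrite /index_enum !unlock /= /option_enum !unlock.
by rewrite big_cons big_map.
Qed.

Definition inv {R : realFieldType} {N : nat} (x y : 'I_N -> R) (m : nat)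
   (mu : option 'I_N -> option 'I_N -> R) : Prop :=
 [/\ (forall a b, 0 <= mu a b),
     (forall k, mu (Some k) (Some k) = 0),
     (forall k : 'I_N, (m <= k)%N -> (forall b, mu (Some k) b = 0) /\ (forall a, mu a (Some k) = 0)),
     \sum_a \sum_b mu a b = 1 &
     (forall k : 'I_N, (k < m)%N -> \sum_b mu (Some k) b = x k /\ \sum_a mu a (Some k) = y k)]
 /\ (mu None None = 0 \/ mu None None = 1 - \sum_(k < N | (k < m)%N) (x k + y k)).

Lemma sum_sub_le (R : realFieldType) N (P : pred 'I_N) (x : 'I_N -> R) :
  (forall k, 0 <= x k) -> \sum_(k | P k) x k <= \sum_k x k.
Proof.
move=> hx; rewrite [X in _ <= X](bigID P) /= lerDl; apply: sumr_ge0 => k _; exact: hx.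
Qed.

Lemma sum_lt_succ (R : realFieldType) N (m : nat) (j : 'I_N) (x : 'I_N -> R) :
  nat_of_ord j = m ->
  \sum_(k < N | (k < m.+1)%N) x k = \sum_(k < N | (k < m)%N) x k + x j.
Proof.
move=> hj; rewrite (bigD1 j) /=; last by rewrite hj.
rewrite addrC; congr (_ + _); apply: eq_bigl => k.
rewrite ltnS leq_eqVlt -val_eqE /= hj; case: (ltngtP k m) => //.
Qed.
Lemma sum_ifj (R : realFieldType) N (j : 'I_N) (c : R) (g : 'I_N -> R) :
  \sum_k (if k == j then c else g k) = c + \sum_k g k - g j.
Proof.
rewrite (bigD1 j) //= eqxx [in RHS](bigD1 j) //=.
have -> : \sum_(i < N | i != j) (if i == j then c else g i) = \sum_(i < N | i != j) g i.
  by apply: eq_bigr => i /negbTE ->.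
ring.
Qed.

Lemma divK_le (R : realFieldType) (t p : R) : 0 <= t -> t <= p -> t / p * p = t.
Proof.
move=> ht htp; have [hp0|hp] := eqVneq p 0.
  rewrite hp0 in htp *; rewrite mulr0; lra.
by rewrite divfK.
Qed.

Lemma div_in01 (R : realFieldType) (t p : R) : 0 <= t -> t <= p -> 0 <= t / p /\ t / p <= 1.
Proof.
move=> ht htp; have hp : 0 <= p by apply: le_trans htp.
split; first by rewrite divr_ge0.
have [->|hp0] := eqVneq p 0; first by rewrite invr0 mulr0 ler01.
by rewrite ler_pdivrMr ?mul1r // lt0r hp0.
Qed.

Lemma ins_step (R : realFieldType) N (x y : 'I_N -> R)
  (hx : forall k, 0 <= x k) (hy : forall k, 0 <= y k)
  (hsx : \sum_k x k <= 1) (hsy : \sum_k y k <= 1) (hxy : forall k, x k + y k <= 1)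
  (m : nat) (hm : (m < N)%N) (mu : option 'I_N -> option 'I_N -> R) :
  inv x y m mu -> exists mu', inv x y m.+1 mu'.
Proof.
move=> [[h0 hdiag hunt htot hmarg] hz].
pose j : 'I_N := Ordinal hm.
pose u := x j; pose w := y j; pose z := mu None None.
pose p := \sum_k mu None (Some k); pose q := \sum_k mu (Some k) None.
pose X' := \sum_(k < N | (k < m)%N) x k; pose Y' := \sum_(k < N | (k < m)%N) y k.
have hunt1 : forall b, mu (Some j) b = 0 by move=> b; exact: (proj1 (hunt j (leqnn m)) b).
have hunt2 : forall a, mu a (Some j) = 0 by move=> a; exact: (proj2 (hunt j (leqnn m)) a).
have hX : X' = \sum_k \sum_b mu (Some k) b.
  rewrite /X' [RHS](bigID (fun k : 'I_N => (k < m)%N)) /=.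
  rewrite [X in _ = _ + X]big1 ?addr0.
    by apply: eq_bigr => k hk; rewrite (proj1 (hmarg k hk)).
  move=> k; rewrite -leqNgt => hk; apply: big1 => b _; exact: (proj1 (hunt k hk) b).
have hY : Y' = \sum_k \sum_a mu a (Some k).
  rewrite /Y' [RHS](bigID (fun k : 'I_N => (k < m)%N)) /=.
  rewrite [X in _ = _ + X]big1 ?addr0.
    by apply: eq_bigr => k hk; rewrite (proj2 (hmarg k hk)).
  move=> k; rewrite -leqNgt => hk; apply: big1 => b _; exact: (proj2 (hunt k hk) b).
have hp : p = 1 - X' - z.
  move: htot; rewrite sum_option sum_option -hX -/p -/z => <-; ring.
have hq : q = 1 - Y' - z.
  move: htot; rewrite exchange_big /= sum_option sum_option -hY.
  have -> : \sum_k mu (Some k) None = q by [].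
  rewrite -/z => <-; ring.
have hp0 : 0 <= p by apply: sumr_ge0.
have hq0 : 0 <= q by apply: sumr_ge0.
have hz0 : 0 <= z by apply: h0.
have hXu : X' + u <= 1.
  rewrite /X' /u -(sum_lt_succ x (erefl (nat_of_ord j))).
  apply: le_trans hsx; exact: sum_sub_le.
have hYw : Y' + w <= 1.
  rewrite /Y' /w -(sum_lt_succ y (erefl (nat_of_ord j))).
  apply: le_trans hsy; exact: sum_sub_le.
have hz' : z = 0 \/ z = 1 - (X' + Y').
  by move: hz; rewrite big_split.
pose b0 := if 0 <= w - q then w - q else 0.
pose al := if u <= z - b0 then u else z - b0.
pose be := if w <= z - al then w else z - al.
have := @scalar_step R u w X' Y' z p q (hx j) (hy j) (hxy j) hXu hYw hz0 hp0 hq0 hp hq hz' b0 al be erefl erefl erefl.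
move=> [[hal0 halu hbe0 hbew halbe] [hap hbq hznew]].
pose tp := (u - al) / p; pose tq := (w - be) / q.
have [htp0 htp1] : 0 <= tp /\ tp <= 1 by apply: div_in01; lra.
have [htq0 htq1] : 0 <= tq /\ tq <= 1 by apply: div_in01; lra.
have htpp : tp * p = u - al by apply: divK_le; lra.
have htqq : tq * q = w - be by apply: divK_le; lra.
pose mu' (a b : option 'I_N) : R :=
  match a, b with
  | None, None => z - al - be
  | Some k, None => if k == j then al else (1 - tq) * mu (Some k) None
  | None, Some k => if k == j then be else (1 - tp) * mu None (Some k)
  | Some k, Some k' =>
      if k == j then (if k' == j then 0 else tp * mu None (Some k'))
      else if k' == j then tq * mu (Some k) None else mu (Some k) (Some k')
  end.
have rowS : forall k, \sum_b mu' (Some k) b = if k == j then u else \sum_b mu (Some k) b.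
  move=> k; rewrite sum_option /=.
  have [hkj0|hkj] := eqVneq k j; [subst k|].
    have -> : \sum_t (if t == j then 0 else tp * mu None (Some t)) = tp * p.
      by rewrite sum_ifj /p mulr_sumr hunt2 mulr0; ring.
    rewrite htpp; ring.
  rewrite sum_option.
  have -> : \sum_t (if t == j then tq * mu (Some k) None else mu (Some k) (Some t))
     = tq * mu (Some k) None + \sum_t mu (Some k) (Some t).
    by rewrite sum_ifj hunt2; ring.
  ring.
have colS : forall k, \sum_a mu' a (Some k) = if k == j then w else \sum_a mu a (Some k).
  move=> k; rewrite sum_option /=.
  have [hkj0|hkj] := eqVneq k j; [subst k|].
    have -> : \sum_t (if t == j then 0 else tq * mu (Some t) None) = tq * q.
      by rewrite (eq_bigr (fun t => if t == j then 0 else tq * mu (Some t) None)) ?sum_ifj /q ?mulr_sumr ?hunt1 ?mulr0; [ring | move=> t _; case: eqP].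
    rewrite htqq; ring.
  rewrite sum_option.
  have -> : \sum_t (if t == j then tp * mu None (Some k) else mu (Some t) (Some k))
     = tp * mu None (Some k) + \sum_t mu (Some t) (Some k).
    rewrite sum_ifj hunt1; ring.
  ring.
exists mu'; split; last first.
  rewrite /= (sum_lt_succ (fun k => x k + y k) (erefl (nat_of_ord j))) big_split /= -/X' -/Y'.
  case: hznew => ->; [by left | right]; rewrite /u /w; ring.
split.
- move=> [k|] [k'|] /=.
  + case: eqP => _; first (case: eqP => _; first exact: lexx).
      exact: mulr_ge0.
    case: eqP => _; [exact: mulr_ge0 | exact: h0].
  + by case: eqP => _ //; apply: mulr_ge0; rewrite ?subr_ge0 //.
  + by case: eqP => _ //; apply: mulr_ge0; rewrite ?subr_ge0 //.
  + lra.
- by move=> k /=; case: eqP => // _; rewrite eqxx.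
- move=> k hk.
  have hkj : k != j by apply/eqP => hkj; move: hk; rewrite hkj /= ltnn.
  have hkm : (m <= k)%N by apply: ltnW.
  split.
    move=> [k'|] /=; rewrite (negbTE hkj).
      by case: eqP => _; rewrite (proj1 (hunt k hkm)) ?mulr0.
    by rewrite (proj1 (hunt k hkm)) mulr0.
  move=> [k'|] /=; rewrite (negbTE hkj).
    by case: eqP => _; rewrite (proj2 (hunt k hkm)) ?mulr0.
  by rewrite (proj2 (hunt k hkm)) mulr0.
- rewrite sum_option.
  rewrite (eq_bigr (fun k => if k == j then u else \sum_b mu (Some k) b)); last first.
    by move=> k _; rewrite rowS.
  rewrite sum_ifj -hX.
  have -> : \sum_b mu (Some j) b = 0 by apply: big1 => b _; exact: hunt1.
  rewrite subr0 sum_option /=.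
  have -> : \sum_t (if t == j then be else (1 - tp) * mu None (Some t)) = be + (1 - tp) * p.
    rewrite sum_ifj hunt2 /p mulr_sumr; ring.
  rewrite mulrBl mul1r htpp; lra.
- move=> k hk; rewrite rowS colS.
  have [hkj0|hkj] := eqVneq k j; first by subst k.
  have hkm : (k < m)%N.
    move: hk; rewrite ltnS leq_eqVlt => /orP [/eqP hkm|//].
    by move/eqP: hkj; case; apply: val_inj.
  exact: hmarg.
Qed.
Lemma realize (R : realFieldType) N (x y : 'I_N -> R)
  (hx : forall k, 0 <= x k) (hy : forall k, 0 <= y k)
  (hsx : \sum_k x k <= 1) (hsy : \sum_k y k <= 1) (hxy : forall k, x k + y k <= 1) :
  exists mu, inv x y N mu.
Proof.
suff : forall m, (m <= N)%N -> exists mu, inv x y m mu by apply.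
elim=> [_|m IH hm].
  exists (fun a b => match a, b with None, None => 1 | _, _ => 0 end).
  split; last first.
    right; rewrite big1 ?subr0 // => k; by rewrite ltn0.
  split.
  - by move=> [a|] [b|] //=.
  - by [].
  - by move=> k _; split => [] [].
  - rewrite sum_option sum_option /= big1 ?addr0.
      by rewrite big1 ?addr0 // => b _; rewrite big1.
    by move=> k _.
  - by move=> k; rewrite ltn0.
have [mu hmu] := IH (ltnW hm).
exact: ins_step hmu.
Qed.
Lemma relay_src N (k : 'I_N) : (relay k == src) = false.
Proof. by rewrite -val_eqE. Qed.
Lemma src_relay N (k : 'I_N) : (src == relay k) = false.
Proof. by rewrite -val_eqE. Qed.
Lemma relay_dst N (k : 'I_N) : (relay k == dst) = false.
Proof. by rewrite -val_eqE /= eqSS; apply/negbTE; rewrite neq_ltn ltn_ord. Qed.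
Lemma dst_relay N (k : 'I_N) : (dst == relay k) = false.
Proof. by rewrite eq_sym relay_dst. Qed.
Lemma src_dst N : (@src N == dst) = false.
Proof. by rewrite -val_eqE. Qed.
Lemma dst_src N : (@dst N == src) = false.
Proof. by rewrite -val_eqE. Qed.
Lemma relay_inj N (k k' : 'I_N) : (relay k == relay k') = (k == k').
Proof. by rewrite -!val_eqE /=. Qed.

Definition stOf N (a b : option 'I_N) : state N :=
 ([ffun i => if i == src then (if a is Some k then [set relay k] else set0)
             else if b is Some k then (if i == relay k then [set dst] else set0) else set0],
  [ffun i => if i == dst then (if b is Some k then [set relay k] else set0)
             else if a is Some k then (if i == relay k then [set src] else set0) else set0]).

Definition good N (a b : option 'I_N) : bool :=
  match a, b with Some k, Some k' => k != k' | _, _ => true end.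

Lemma stOf_valid N (a b : option 'I_N) : good a b -> valid_state (stOf a b).
Proof.
move=> hg; apply/andP; split; first apply/andP; first split.
- apply/forallP => i; rewrite /st /sr /is_relay /= !ffunE.
  case: (eqVneq i src) => [->|his].
    case: a hg => [k|] hg; case: b hg => [k'|] hg;
      rewrite ?(src_dst, dst_src, src_relay, dst_relay, relay_src, relay_dst, eqxx) /=;
      rewrite ?cards1 ?cards0 ?in_set1 ?in_set0 ?(src_dst, dst_src, src_relay, dst_relay, relay_src, relay_dst, eqxx) //=.
  case: (eqVneq i dst) => [->|hid].
    case: a hg => [k|] hg; case: b hg => [k'|] hg;
      rewrite ?(src_dst, dst_src, src_relay, dst_relay, relay_src, relay_dst, eqxx) /=;
      rewrite ?cards1 ?cards0 ?in_set1 ?in_set0 ?(src_dst, dst_src, src_relay, dst_relay, relay_src, relay_dst, eqxx) //=.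
  case: a hg => [k|] hg; case: b hg => [k'|] hg /=;
   try (case: (eqVneq i (relay k)) => [->|hik]); try (case: (eqVneq i (relay k')) => [->|hik']);
   rewrite ?(src_dst, dst_src, src_relay, dst_relay, relay_src, relay_dst, eqxx, relay_inj) /=;
   rewrite ?cards1 ?cards0 ?in_set1 ?in_set0 ?(src_dst, dst_src, src_relay, dst_relay, relay_src, relay_dst, eqxx, relay_inj) //=;
   try by rewrite eq_sym (negbTE hg).
  all: try by rewrite (negbTE hg) ?cards0 ?in_set0.
- rewrite /sr /stOf /= ffunE src_dst; case: a hg => [k|] // _; by rewrite src_relay.
- rewrite /st /stOf /= ffunE dst_src; case: b hg => [k|]; case: a => [?|] // _; by rewrite dst_relay.
Qed.
Lemma active_src N (a b : option 'I_N) (k : 'I_N) :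
  active (stOf a b) src (relay k) = (a == Some k).
Proof.
rewrite /active /st /sr /stOf /= !ffunE eqxx relay_dst.
case: a => [k'|] /=; last by rewrite in_set0.
rewrite in_set1 relay_inj; case: (eqVneq k k') => [->|hne]; first by rewrite eqxx in_set1 eqxx.
rewrite /=; apply/esym/eqP => -[h]; by rewrite h eqxx in hne.
Qed.

Lemma active_dst N (a b : option 'I_N) (k : 'I_N) :
  active (stOf a b) (relay k) dst = (b == Some k).
Proof.
rewrite /active /st /sr /stOf /= !ffunE eqxx relay_src.
case: b => [k'|] /=; last by rewrite in_set0.
rewrite relay_inj in_set1 relay_inj.
case: (eqVneq k k') => [->|hne]; first by rewrite in_set1 !eqxx.
rewrite andbF; apply/esym/eqP => -[h]; by rewrite h eqxx in hne.
Qed.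

Definition lamOf {R : realFieldType} N (mu : option 'I_N -> option 'I_N -> R) (s : state N) : R :=
  \sum_a \sum_b (if stOf a b == s then mu a b else 0).

Lemma sum_pick1 (R : realFieldType) (T : finType) (t : T) (P : pred T) (c : R) :
  \sum_(s | P s) (if t == s then c else 0) = if P t then c else 0.
Proof.
rewrite big_mkcond (bigD1 t) //= eqxx big1 ?addr0; first by case: (P t).
by move=> s hs; rewrite eq_sym (negbTE hs); case: (P s).
Qed.

Lemma sum_lam (R : realFieldType) N (mu : option 'I_N -> option 'I_N -> R) (P : pred (state N)) :
  \sum_(s | P s) lamOf mu s = \sum_a \sum_b (if P (stOf a b) then mu a b else 0).
Proof.
rewrite /lamOf exchange_big /=; apply: eq_bigr => a _.
rewrite exchange_big /=; apply: eq_bigr => b _; exact: sum_pick1.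
Qed.

Lemma sum_single (R : realFieldType) (T : finType) (A : pred T) (a : T) (G : T -> R) :
  (forall i, i != a -> G i = 0) -> \sum_(i in A) G i = if a \in A then G a else 0.
Proof.
move=> h; case: (boolP (a \in A)) => ha.
  rewrite (bigD1 a) //= big1 ?addr0 // => i /andP [_ hi]; exact: h.
apply: big1 => i hi; apply: h; apply/eqP => e; move: hi; by rewrite e (negbTE ha).
Qed.

Definition W {R : realFieldType} {N} (lam : state N -> R) (i j : node N) : R :=
  \sum_(s : state N | valid_state s && active s i j) lam s.

Lemma cut_formula (R : realFieldType) N (lcap rcap : 'I_N -> R) (lam : state N -> R)
  (Om : {set node N}) : is_cut Om ->
  cut_value lcap rcap lam Om =
  \sum_k (if relay k \in Om then W lam (relay k) dst * rcap k else W lam src (relay k) * lcap k).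
Proof.
move=> /andP [hs hd].
rewrite /cut_value /ell.
under eq_bigr => i _ do under eq_bigr => j _ do rewrite mulr_sumr.
under eq_bigr => i _ do rewrite exchange_big.
rewrite exchange_big /=; apply: eq_bigr => k _.
under eq_bigr => i _ do under eq_bigr => j _ do rewrite mulrDr.
under eq_bigr => i _ do rewrite big_split.
rewrite big_split /=.
rewrite (@sum_single R _ (mem Om) src); last first.
  move=> i hi; apply: big1 => j _; by rewrite (negbTE hi) /= mulr0.
rewrite (@sum_single R _ (mem Om) (relay k) (fun i => \sum_(j in ~: Om) _)); last first.
  move=> i hi; apply: big1 => j _; by rewrite (negbTE hi) /= mulr0.
rewrite (@sum_single R _ (mem (~: Om)) (relay k)); last first.
  move=> j hj; by rewrite eqxx /= (negbTE hj) mulr0.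
rewrite (@sum_single R _ (mem (~: Om)) dst); last first.
  move=> j hj; by rewrite (negbTE hj) andbF mulr0.
rewrite !inE hs hd /= !eqxx /W /=.
by case: (relay k \in Om) => /=; rewrite ?add0r ?addr0.
Qed.
Lemma le1_uniq (T : finType) (A : {set T}) x y : (#|A| <= 1)%N -> x \in A -> y \in A -> x = y.
Proof.
move/card_le1P => h hx hy; have := h x hx y; rewrite hy => /esym/eqP -> //.
Qed.

Lemma valid_facts N (s : state N) : valid_state s -> forall i,
  [/\ (#|st s i| <= 1)%N, (#|sr s i| <= 1)%N & is_relay i -> (#|st s i| + #|sr s i| <= 1)%N].
Proof.
move/andP => [/andP [/forallP H _] _] i.
case/and3P: (H i) => h1 h2 /and5P [_ _ _ _ /implyP h7]; split => //.
Qed.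

Lemma relay_is_relay N (k : 'I_N) : is_relay (relay k).
Proof. by rewrite /is_relay relay_src relay_dst. Qed.

Lemma at_most_one (R : realFieldType) N (P : pred 'I_N) (c : R) :
  0 <= c -> (forall k k', P k -> P k' -> k = k') -> \sum_k (if P k then c else 0) <= c.
Proof.
move=> hc hu; case: (pickP P) => [k0 hk0|hn].
  rewrite (bigD1 k0) //= hk0 big1 => [|k hk]; first by rewrite addr0.
  case: ifP => // hPk; by rewrite (hu _ _ hPk hk0) eqxx in hk.
rewrite big1; first exact: hc.
by move=> k _; rewrite hn.
Qed.

Lemma sum_eqc (R : realFieldType) (T : finType) (t : T) (F : T -> R) :
  \sum_a (if a == t then F a else 0) = F t.
Proof. rewrite (bigD1 t) //= eqxx big1 => [|a /negbTE -> //]; by rewrite addr0. Qed.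

Lemma W_facts (R : realFieldType) N (lam : state N -> R) :
  prob_vec lam ->
  [/\ forall k, 0 <= W lam src (relay k), forall k, 0 <= W lam (relay k) dst,
      \sum_k W lam src (relay k) <= 1, \sum_k W lam (relay k) dst <= 1 &
      forall k, W lam src (relay k) + W lam (relay k) dst <= 1].
Proof.
move=> [h0 h1].
have mk : forall i j, W lam i j = \sum_(s | valid_state s) (if active s i j then lam s else 0).
  by move=> i j; rewrite /W big_mkcondr.
split.
- move=> k; apply: sumr_ge0 => s _; exact: h0.
- move=> k; apply: sumr_ge0 => s _; exact: h0.
- under eq_bigr => k _ do rewrite mk.
  rewrite exchange_big /= -h1; apply: ler_sum => s hs.
  apply: at_most_one => // k k' hk hk'.
  have [hst _ _] := valid_facts hs src.
  move/andP: hk => [hk _]; move/andP: hk' => [hk' _].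
  have := le1_uniq hst hk hk' => /eqP; rewrite relay_inj => /eqP //.
- under eq_bigr => k _ do rewrite mk.
  rewrite exchange_big /= -h1; apply: ler_sum => s hs.
  apply: at_most_one => // k k' hk hk'.
  have [_ hsr _] := valid_facts hs dst.
  move/andP: hk => [_ hk]; move/andP: hk' => [_ hk'].
  have := le1_uniq hsr hk hk' => /eqP; rewrite relay_inj => /eqP //.
- move=> k; rewrite !mk -big_split /= -h1; apply: ler_sum => s hs.
  have [_ _ h3] := valid_facts hs (relay k).
  have := h3 (relay_is_relay k).
  case: (boolP (active s src (relay k))) => /= ha; case: (boolP (active s (relay k) dst)) => /= hb;
    rewrite ?addr0 ?add0r ?lexx ?h0 //.
  move/andP: ha => [_ ha]; move/andP: hb => [hb _].
  have : (0 < #|st s (relay k)|)%N by apply/card_gt0P; exists dst.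
  have : (0 < #|sr s (relay k)|)%N by apply/card_gt0P; exists src.
  move=> hsr hst hle; exfalso; by have := leq_trans (leq_add hst hsr) hle.
Qed.
Definition lpA {R : realFieldType} {N} (lcap rcap : 'I_N -> R)
    (c : (('I_5 * 'I_N) + bool)%type) (v : (bool * 'I_N)%type) : R :=
 match c with
 | inl (t, i) => if v.2 == i then
     (match nat_of_ord t with
      | 0 => if v.1 then lcap i else - rcap i
      | 1 => if v.1 then - lcap i else rcap i
      | 2 => 1
      | 3 => if v.1 then -1 else 0
      | _ => if v.1 then 0 else -1 end) else 0
 | inr bb => if v.1 == bb then 1 else 0
 end.

Definition lpB {R : realFieldType} {N} (c : (('I_5 * 'I_N) + bool)%type) : R :=
  match c with inl (t, i) => if (nat_of_ord t == 2)%N then 1 else 0 | inr _ => 1 end.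

Definition lpObj {R : realFieldType} {N} (lcap : 'I_N -> R) (v : (bool * 'I_N)%type) : R :=
  if v.1 then lcap v.2 else 0.

Lemma sumV (R : realFieldType) N (G : (bool * 'I_N)%type -> R) :
  \sum_v G v = \sum_i G (true, i) + \sum_i G (false, i).
Proof.
rewrite (eq_bigr (fun v => G (v.1, v.2))); last by move=> -[].
by rewrite -(pair_bigA _ (fun b i => G (b, i))) /= big_bool.
Qed.

Lemma sum_loc (R : realFieldType) N (i : 'I_N) (c : R) (g : 'I_N -> R) :
  \sum_k (if k == i then c else 0) * g k = c * g i.
Proof.
rewrite (bigD1 i) //= eqxx big1 => [|k /negbTE ->]; [by rewrite addr0 | by rewrite mul0r].
Qed.

Lemma dot_loc (R : realFieldType) N (i : 'I_N) (h : bool -> R) (x : (bool * 'I_N)%type -> R) :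
  dot (fun v => if v.2 == i then h v.1 else 0) x = h true * x (true, i) + h false * x (false, i).
Proof.
rewrite /dot sumV /=.
by rewrite (sum_loc i (h true) (fun k => x (true, k))) (sum_loc i (h false) (fun k => x (false, k))).
Qed.

Lemma dot_glob (R : realFieldType) N (bb : bool) (x : (bool * 'I_N)%type -> R) :
  dot (fun v => if v.1 == bb then 1 else 0) x = \sum_i x (bb, i).
Proof.
rewrite /dot sumV /=.
have z0 : forall b, \sum_(i < N) 0 * x (b, i) = 0 by move=> b; apply: big1 => i _; rewrite mul0r.
have z1 : forall b, \sum_(i < N) 1 * x (b, i) = \sum_i x (b, i) by move=> b; apply: eq_bigr => i _; rewrite mul1r.
case: bb => /=; by rewrite z0 z1 ?addr0 ?add0r.
Qed.
Definition lpH {R : realFieldType} {N} (lcap rcap : 'I_N -> R) (t : 'I_5) (i : 'I_N) (b : bool) : R :=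
  match nat_of_ord t with
      | 0 => if b then lcap i else - rcap i
      | 1 => if b then - lcap i else rcap i
      | 2 => 1
      | 3 => if b then -1 else 0
      | _ => if b then 0 else -1 end.

Lemma lpA_dot (R : realFieldType) N (lcap rcap : 'I_N -> R) t i x :
  dot (lpA lcap rcap (inl (t, i))) x =
  lpH lcap rcap t i true * x (true, i) + lpH lcap rcap t i false * x (false, i).
Proof. exact: (dot_loc i (lpH lcap rcap t i) x). Qed.

Lemma lp_feas_iff (R : realFieldType) N (lcap rcap : 'I_N -> R) (x : (bool * 'I_N)%type -> R) :
  (forall c, dot (lpA lcap rcap c) x <= lpB c) <->
  lp_feasible lcap rcap (fun i => x (true, i)) (fun i => x (false, i)).
Proof.
split.
- move=> h.
  have h0 := fun i => h (inl (Ordinal (isT : (0 < 5)%N), i)).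
  have h1 := fun i => h (inl (Ordinal (isT : (1 < 5)%N), i)).
  have h2 := fun i => h (inl (Ordinal (isT : (2 < 5)%N), i)).
  have h3 := fun i => h (inl (Ordinal (isT : (3 < 5)%N), i)).
  have h4 := fun i => h (inl (Ordinal (isT : (4 < 5)%N), i)).
  have ht := h (inr true); have hf := h (inr false).
  rewrite /= dot_glob in ht; rewrite /= dot_glob in hf.
  split; [|split; [by []|split; [by []|split]]].
  + move=> i; move: (h0 i) (h1 i); rewrite !lpA_dot /lpH /=; lra.
  + move=> i; move: (h2 i); rewrite !lpA_dot /lpH /=; lra.
  + move=> i; move: (h3 i) (h4 i); rewrite !lpA_dot /lpH /=; lra.
- move=> [he [hsl [hsr [hsum hpos]]]] [[[t ht] i]|bb].
    rewrite lpA_dot /lpH /=.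
    have := he i; have := hsum i; have := hpos i.
    case: t ht => [|[|[|[|[|t]]]]] ht //= ; lra.
  rewrite dot_glob; by case: bb.
Qed.

Lemma lp_obj (R : realFieldType) N (lcap : 'I_N -> R) (x : (bool * 'I_N)%type -> R) :
  dot (lpObj lcap) x = \sum_i x (true, i) * lcap i.
Proof.
rewrite /dot sumV /= [X in _ + X]big1 ?addr0 => [|i _]; last by rewrite mul0r.
by apply: eq_bigr => i _; rewrite mulrC.
Qed.
Lemma valid_ite (R : realFieldType) N (mu : option 'I_N -> option 'I_N -> R)
  (hdiag : forall k, mu (Some k) (Some k) = 0) a b (P : bool) :
  (if valid_state (stOf a b) && P then mu a b else 0) = (if P then mu a b else 0).
Proof.
case: (boolP (good a b)) => hg; first by rewrite stOf_valid.
case: a b hg => [k|] [k'|] //= /negPn /eqP <-; rewrite hdiag; by case: ifP; case: ifP.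
Qed.

Lemma W_src (R : realFieldType) N (mu : option 'I_N -> option 'I_N -> R)
  (hdiag : forall k, mu (Some k) (Some k) = 0) k :
  W (lamOf mu) src (relay k) = \sum_b mu (Some k) b.
Proof.
rewrite /W sum_lam.
under eq_bigr => a _ do under eq_bigr => b _ do rewrite active_src valid_ite //.
rewrite -(sum_eqc (Some k) (fun a => \sum_b mu a b)); apply: eq_bigr => a _.
case: eqP => _ //; by rewrite big1.
Qed.

Lemma W_dst (R : realFieldType) N (mu : option 'I_N -> option 'I_N -> R)
  (hdiag : forall k, mu (Some k) (Some k) = 0) k :
  W (lamOf mu) (relay k) dst = \sum_a mu a (Some k).
Proof.
rewrite /W sum_lam.
under eq_bigr => a _ do under eq_bigr => b _ do rewrite active_dst valid_ite //.
apply: eq_bigr => a _; exact: sum_eqc.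
Qed.

Theorem mainTheorem6 (R : realFieldType) (N : nat) (lcap rcap : 'I_N -> R)
  (hl : forall i, 0 < lcap i) (hr : forall i, 0 < rcap i) :
  exists c : R, is_max (cs_values lcap rcap) c /\ is_max (lp_values lcap rcap) c.
Proof.
have bnd : forall e, (forall c, dot (lpA lcap rcap c) e <= 0) -> forall v, e v = 0.
  move=> e h [bb i].
  have h2 := h (inl (Ordinal (isT : (2 < 5)%N), i)).
  have h3 := h (inl (Ordinal (isT : (3 < 5)%N), i)).
  have h4 := h (inl (Ordinal (isT : (4 < 5)%N), i)).
  move: h2 h3 h4; rewrite !lpA_dot /lpH /=.
  case: bb; lra.
have h00 : forall c, dot (lpA lcap rcap c) (fun _ => 0) <= lpB c.
  move=> c; rewrite /dot big1 => [|v _]; last by rewrite mulr0.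
  case: c => [[t i]|bb] /=; last exact: ler01.
  by case: (nat_of_ord t == 2)%N.
have [x [hx hopt]] := lp_max (lpObj lcap) bnd h00.
have hfeas := (proj1 (lp_feas_iff lcap rcap x)) hx.
pose xl := fun i => x (true, i); pose xr := fun i => x (false, i).
pose cs := \sum_i xl i * lcap i.
have [he [hsl [hsr [hsum hpos]]]] := hfeas.
exists cs; split; last first.
  split; first by exists xl, xr.
  move=> v [yl [yr [hy ->]]].
  pose y := fun v : (bool * 'I_N)%type => if v.1 then yl v.2 else yr v.2.
  have hy' : forall c, dot (lpA lcap rcap c) y <= lpB c by apply/lp_feas_iff.
  have := hopt y hy'; rewrite !lp_obj //.
split.
- have [mu [[h0 hdiag hunt htot hmarg] _]] := realize (fun i => proj1 (hpos i)) (fun i => proj2 (hpos i)) hsl hsr hsum.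
  have hWs : forall k, W (lamOf mu) src (relay k) = xl k.
    by move=> k; rewrite W_src // (proj1 (hmarg k (ltn_ord k))).
  have hWd : forall k, W (lamOf mu) (relay k) dst = xr k.
    by move=> k; rewrite W_dst // (proj2 (hmarg k (ltn_ord k))).
  have hcut : forall Om, is_cut Om -> cut_value lcap rcap (lamOf mu) Om = cs.
    move=> Om hOm; rewrite cut_formula //; apply: eq_bigr => k _.
    rewrite hWs hWd; case: ifP => _ //; by rewrite (he k).
  exists (lamOf mu); split.
    split.
      move=> s; apply: sumr_ge0 => a _; apply: sumr_ge0 => b _; case: ifP => _ //.
    rewrite sum_lam -htot; apply: eq_bigr => a _; apply: eq_bigr => b _.
    by rewrite -[valid_state _]andbT valid_ite.
  split.
    exists [set src]; split; last by rewrite hcut // /is_cut !in_set1 eqxx dst_src.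
    by rewrite /is_cut !in_set1 eqxx dst_src.
  by move=> Om hOm; rewrite hcut.
- move=> c [lam [hlam [_ hmin]]].
  have [hX0 hY0 hXs hYs hXY] := W_facts hlam.
  pose X := fun k => W lam src (relay k); pose Y := fun k => W lam (relay k) dst.
  pose m := fun k => if X k * lcap k <= Y k * rcap k then X k * lcap k else Y k * rcap k.
  pose S := [set k | Y k * rcap k < X k * lcap k].
  pose Om := src |: (relay @: S).
  have hrinj : injective (@relay N) by move=> k k' /(congr1 val) [] /val_inj.
  have hOm : is_cut Om.
    rewrite /is_cut /Om !inE eqxx /=; apply/negP => /imsetP [k _ hk].
    by move: (relay_dst k); rewrite -hk eqxx.
  have := hmin Om hOm; rewrite cut_formula // => hc.
  pose zl := fun k => m k / lcap k; pose zr := fun k => m k / rcap k.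
  have hm0 : forall k, 0 <= m k.
    move=> k; rewrite /m; case: ifP => _; apply: mulr_ge0; rewrite /X /Y ?hX0 ?hY0 ?ltW //.
  have hmX : forall k, m k <= X k * lcap k by move=> k; rewrite /m; case: ifP => // /negbT; rewrite -ltNge => /ltW.
  have hmY : forall k, m k <= Y k * rcap k by move=> k; rewrite /m; case: ifP.
  have hzl : forall k, zl k <= X k by move=> k; rewrite /zl ler_pdivrMr.
  have hzr : forall k, zr k <= Y k by move=> k; rewrite /zr ler_pdivrMr.
  have hzl0 : forall k, 0 <= zl k by move=> k; rewrite /zl divr_ge0 // ltW.
  have hzr0 : forall k, 0 <= zr k by move=> k; rewrite /zr divr_ge0 // ltW.
  have hzfeas : lp_feasible lcap rcap zl zr.
    split; first by move=> k; rewrite /zl /zr !divfK // lt0r_neq0.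
    split; first by apply: le_trans hXs; apply: ler_sum => k _; exact: hzl.
    split; first by apply: le_trans hYs; apply: ler_sum => k _; exact: hzr.
    split; last by move=> k; split; [exact: hzl0 | exact: hzr0].
    move=> k; apply: le_trans (hXY k); apply: lerD; [exact: hzl | exact: hzr].
  have hval : c <= \sum_k zl k * lcap k.
    apply: (le_trans hc); rewrite le_eqVlt; apply/orP; left; apply/eqP.
    apply: eq_bigr => k _; rewrite /zl divfK ?lt0r_neq0 //.
    rewrite /Om !inE relay_src /= mem_imset // inE /m -/X -/Y.
    by case: ltP.
  have hy' : forall cc, dot (lpA lcap rcap cc) (fun v => if v.1 then zl v.2 else zr v.2) <= lpB cc.
    exact: (proj2 (lp_feas_iff lcap rcap _) hzfeas).
  apply: (le_trans hval); have := hopt _ hy'; rewrite !lp_obj //.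
Qed.
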